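(* Let $t\in\mathbb{R}^K$ be fixed and let $\Lambda\subseteq\mathbb{R}^K\setminus\{0\}$ be an arbitrary (possibly infinite) set. For $\lambda\in\Lambda$ and $\varrho\in\mathbb{R}^N$ define $$f(\lambda,\varrho)=\frac{\max\left[0,\ \lambda^T\{t-\mu(\varrho)\}\right]^2}{\lambda^T\Sigma(\varrho)\lambda},\qquad g(\varrho)=\sup_{\lambda\in\Lambda}f(\lambda,\varrho).$$ Then $g$ is a convex function of $\varrho$ on the convex set $\mathcal{C}=\{\varrho\in\mathbb{R}^N:\Sigma(\varrho)\text{ is positive definite}\}$ (on which $g$ is finite).
   Context: There are $I$ strata; stratum $i$ contains $n_i\ge 2$ units, indexed $(i,j)$, $j=1,\dots,n_i$, and $N=\sum_{i=1}^I n_i$. Vectors in $\mathbb{R}^N$ are indexed lexicographically by $(i,j)$. There are $K$ outcomes, and for each unit $(i,j)$ and outcome $k$ there is a fixed real constant $q_{ijk}$. For $\varrho=(\varrho_{ij})\in\mathbb{R}^N$ define $\mu(\varrho)\in\mathbb{R}^K$ and the $K\times K$ matrix $\Sigma(\varrho)$ by $$\mu(\varrho)_k=\sum_{i=1}^I\sum_{j=1}^{n_i}q_{ijk}\varrho_{ij},\qquad \Sigma(\varrho)_{k\ell}=\sum_{i=1}^I\Big\{\sum_{j=1}^{n_i}q_{ijk}q_{ij\ell}\varrho_{ij}-\Big(\sum_{j=1}^{n_i}q_{ijk}\varrho_{ij}\Big)\Big(\sum_{j=1}^{n_i}q_{ij\ell}\varrho_{ij}\Big)\Big\}.$$ *)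

(* Defs.v *)
From Stdlib Require Import Reals Lra ClassicalEpsilon.
Open Scope R_scope.

Fixpoint sumR (n : nat) (f : nat -> R) : R :=
  match n with O => 0 | S m => sumR m f + f m end.

(* Strata i < I, units j < n i, outcomes k < K.
   q i j k : constants;  rho i j : the vector in R^N (entries outside range unused). *)
Definition mu (I : nat) (n : nat -> nat) (q : nat -> nat -> nat -> R)
  (rho : nat -> nat -> R) (k : nat) : R :=
  sumR I (fun i => sumR (n i) (fun j => q i j k * rho i j)).

Definition Sigma (I : nat) (n : nat -> nat) (q : nat -> nat -> nat -> R)
  (rho : nat -> nat -> R) (k l : nat) : R :=
  sumR I (fun i =>
    sumR (n i) (fun j => q i j k * q i j l * rho i j)
    - sumR (n i) (fun j => q i j k * rho i j) * sumR (n i) (fun j => q i j l * rho i j)).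

Definition quad (K : nat) (S : nat -> nat -> R) (x : nat -> R) : R :=
  sumR K (fun k => sumR K (fun l => x k * S k l * x l)).

Definition nonzeroK (K : nat) (x : nat -> R) : Prop :=
  exists k, (k < K)%nat /\ x k <> 0.

Definition pos_def (K : nat) (S : nat -> nat -> R) : Prop :=
  forall x : nat -> R, nonzeroK K x -> 0 < quad K S x.

Definition f_obj (I K : nat) (n : nat -> nat) (q : nat -> nat -> nat -> R)
  (t : nat -> R) (lam : nat -> R) (rho : nat -> nat -> R) : R :=
  (Rmax 0 (sumR K (fun k => lam k * (t k - mu I n q rho k)))) ^ 2
  / quad K (Sigma I n q rho) lam.

(* supremum of a set of reals: the least upper bound when the set is
   nonempty and bounded above; 0 otherwise (convention) *)
Definition Rsup (E : R -> Prop) : R :=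
  match excluded_middle_informative (bound E /\ exists x, E x) with
  | left H =>
      proj1_sig (completeness E (proj1 H) (proj2 H))
  | right _ => 0
  end.

Definition fvals (I K : nat) (n : nat -> nat) (q : nat -> nat -> nat -> R)
  (t : nat -> R) (Lam : (nat -> R) -> Prop) (rho : nat -> nat -> R) : R -> Prop :=
  fun y => exists lam, Lam lam /\ y = f_obj I K n q t lam rho.

Definition g_obj (I K : nat) (n : nat -> nat) (q : nat -> nat -> nat -> R)
  (t : nat -> R) (Lam : (nat -> R) -> Prop) (rho : nat -> nat -> R) : R :=
  Rsup (fvals I K n q t Lam rho).

Definition inC (I K : nat) (n : nat -> nat) (q : nat -> nat -> nat -> R)
  (rho : nat -> nat -> R) : Prop :=
  pos_def K (Sigma I n q rho).

Definition cvx_comb (th : R) (x y : nat -> nat -> R) : nat -> nat -> R :=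
  fun i j => th * x i j + (1 - th) * y i j.

(* Main.v *)
Require Import Defs.
From Stdlib Require Import Reals Lra Lia Psatz Classical ClassicalEpsilon.
Open Scope R_scope.

Lemma sumR_ext n f g : (forall i, (i < n)%nat -> f i = g i) -> sumR n f = sumR n g.
Proof. induction n; simpl; intros H; auto. rewrite IHn; [rewrite H; auto|intros; apply H; lia]. Qed.

Lemma sumR_zero n f : (forall i, (i < n)%nat -> f i = 0) -> sumR n f = 0.
Proof. induction n; simpl; intros H; auto. rewrite IHn, H; [ring|lia|intros; apply H; lia]. Qed.

Lemma sumR_lin n a b f g : sumR n (fun i => a * f i + b * g i) = a * sumR n f + b * sumR n g.
Proof. induction n; simpl; [ring| rewrite IHn; ring]. Qed.

Lemma sumR_lin3 n a b c f g h :
  sumR n (fun i => a * f i + b * g i + c * h i) = a * sumR n f + b * sumR n g + c * sumR n h.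
Proof. induction n; simpl; [ring| rewrite IHn; ring]. Qed.

Lemma sumR_add n f g : sumR n (fun i => f i + g i) = sumR n f + sumR n g.
Proof. induction n; simpl; [ring| rewrite IHn; ring]. Qed.

Lemma sumR_scal n c f : sumR n (fun i => c * f i) = c * sumR n f.
Proof. induction n; simpl; [ring| rewrite IHn; ring]. Qed.

Lemma sumR_nonneg n f : (forall i, (i < n)%nat -> 0 <= f i) -> 0 <= sumR n f.
Proof. induction n; simpl; intros H; [lra|]. assert (0 <= f n) by (apply H; lia).
  assert (0 <= sumR n f) by (apply IHn; intros; apply H; lia). lra. Qed.

Lemma sumR_swap n m F :
  sumR n (fun i => sumR m (fun j => F i j)) = sumR m (fun j => sumR n (fun i => F i j)).
Proof. induction n; simpl.
  - symmetry; apply sumR_zero; auto.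
  - rewrite IHn, <- sumR_add. reflexivity. Qed.

Lemma sumR_prod n m f g :
  sumR n (fun i => sumR m (fun j => f i * g j)) = sumR n f * sumR m g.
Proof.
  rewrite (sumR_ext n _ (fun i => sumR m g * f i)).
  - rewrite sumR_scal; ring.
  - intros; rewrite sumR_scal; ring. Qed.

Lemma quad_extS K S1 S2 lam : (forall k l, S1 k l = S2 k l) -> quad K S1 lam = quad K S2 lam.
Proof. intros H; unfold quad; apply sumR_ext; intros; apply sumR_ext; intros; rewrite H; auto. Qed.

Lemma quad_ext_lt K S lam mu0 : (forall k, (k < K)%nat -> lam k = mu0 k) -> quad K S lam = quad K S mu0.
Proof. intros H; unfold quad; apply sumR_ext; intros; apply sumR_ext; intros; rewrite !H; auto. Qed.

Lemma quad_lin2 K a b S1 S2 lam :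
  quad K (fun k l => a * S1 k l + b * S2 k l) lam = a * quad K S1 lam + b * quad K S2 lam.
Proof. unfold quad. rewrite <- sumR_lin. apply sumR_ext; intros.
  rewrite <- sumR_lin. apply sumR_ext; intros. ring. Qed.

Lemma quad_lin3 K a b c S1 S2 S3 lam :
  quad K (fun k l => a * S1 k l + b * S2 k l + c * S3 k l) lam
  = a * quad K S1 lam + b * quad K S2 lam + c * quad K S3 lam.
Proof. unfold quad. rewrite <- sumR_lin3. apply sumR_ext; intros.
  rewrite <- sumR_lin3. apply sumR_ext; intros. ring. Qed.

Lemma quad_rank1 K b lam :
  quad K (fun k l => b k * b l) lam = (sumR K (fun k => b k * lam k))^2.
Proof. unfold quad.
  rewrite (sumR_ext K _ (fun k => sumR K (fun l => (b k * lam k) * (b l * lam l)))).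
  - rewrite sumR_prod; ring.
  - intros; apply sumR_ext; intros; ring. Qed.

Lemma quad_gram_nonneg K I w lam :
  0 <= quad K (fun k l => sumR I (fun i => w i k * w i l)) lam.
Proof. unfold quad.
  rewrite (sumR_ext K _ (fun k => sumR I (fun i => sumR K (fun l => (w i k * lam k) * (w i l * lam l))))).
  - rewrite sumR_swap. apply sumR_nonneg; intros. rewrite sumR_prod. nra.
  - intros. rewrite <- sumR_swap. apply sumR_ext; intros.
    rewrite <- sumR_scal, Rmult_comm, <- sumR_scal. apply sumR_ext; intros. ring. Qed.

Lemma quad_split K B lam : quad (S K) B lam = quad K B lam
  + lam K * sumR K (fun k => (B k K + B K k) * lam k) + lam K * B K K * lam K.
Proof. unfold quad. simpl. rewrite sumR_add.
  assert (sumR K (fun k => lam k * B k K * lam K) + sumR K (fun l => lam K * B K l * lam l)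
     = lam K * sumR K (fun k => (B k K + B K k) * lam k)).
  { rewrite <- sumR_add, <- sumR_scal. apply sumR_ext; intros; ring. }
  lra. Qed.

Lemma pd_nonneg K B : pos_def K B -> forall lam, 0 <= quad K B lam.
Proof. intros H lam. destruct (classic (nonzeroK K lam)) as [Hn|Hn].
  - left; apply H; auto.
  - right. symmetry. unfold quad. apply sumR_zero. intros k Hk. apply sumR_zero; intros l Hl.
    assert (lam k = 0). { apply NNPP; intro; apply Hn; exists k; split; auto. }
    rewrite H0; ring. Qed.

Lemma pd_bound : forall K B v, pos_def K B -> exists M, 0 <= M /\
  forall lam, (sumR K (fun k => lam k * v k))^2 <= M * quad K B lam.
Proof.
  induction K; intros B v HB.
  - exists 0; split; [lra|]; intros; simpl; nra.
  - assert (Ha : 0 < B K K).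
    { pose (e := fun k => if Nat.eqb k K then 1 else 0).
      assert (He : forall k, (k < K)%nat -> e k = 0).
      { intros k hk; unfold e. destruct (Nat.eqb_spec k K); [lia|auto]. }
      assert (HK : e K = 1) by (unfold e; rewrite Nat.eqb_refl; auto).
      assert (Hp := HB e ltac:(exists K; split; [lia|rewrite HK; lra])).
      rewrite quad_split in Hp.
      assert (quad K B e = 0).
      { unfold quad; apply sumR_zero; intros; rewrite He; auto; apply sumR_zero; intros; ring. }
      assert (sumR K (fun k => (B k K + B K k) * e k) = 0).
      { apply sumR_zero; intros; rewrite He; auto; ring. }
      rewrite HK in Hp. lra. }
    pose (a := B K K). fold a in Ha.
    pose (b := fun k => (B k K + B K k) / 2).
    pose (B' := fun k l => B k l - b k * b l / a).
    pose (v' := fun k => v k - v K * b k / a).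
    assert (hq' : forall lam, quad K B' lam = quad K B lam - (sumR K (fun k => b k * lam k))^2 / a).
    { intros. transitivity (quad K (fun k l => 1 * B k l + (- / a) * (b k * b l)) lam).
      - apply quad_extS; intros; unfold B'; field; lra.
      - rewrite quad_lin2, quad_rank1. field; lra. }
    assert (hsplit : forall lam, quad (S K) B lam = quad K B lam
       + 2 * lam K * sumR K (fun k => b k * lam k) + a * lam K ^ 2).
    { intros; rewrite quad_split.
      replace (sumR K (fun k => (B k K + B K k) * lam k)) with (2 * sumR K (fun k => b k * lam k)).
      - unfold a; ring.
      - rewrite <- sumR_scal; apply sumR_ext; intros; unfold b; field. }
    assert (HB' : pos_def K B').
    { intros lam Hnz.
      pose (lam' := fun k => if Nat.eqb k K then - sumR K (fun k => b k * lam k) / a else lam k).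
      assert (Heq : forall k, (k < K)%nat -> lam' k = lam k).
      { intros k hk; unfold lam'. destruct (Nat.eqb_spec k K); [lia|auto]. }
      assert (HK : lam' K = - sumR K (fun k => b k * lam k) / a)
        by (unfold lam'; rewrite Nat.eqb_refl; auto).
      assert (Hp : 0 < quad (S K) B lam').
      { apply HB. destruct Hnz as [k [hk hne]]; exists k; split; [lia| rewrite Heq; auto]. }
      rewrite hsplit, (quad_ext_lt K B lam' lam Heq) in Hp.
      rewrite (sumR_ext K (fun k => b k * lam' k) (fun k => b k * lam k)) in Hp
        by (intros; rewrite Heq; auto).
      rewrite HK in Hp. rewrite hq'.
      set (be := sumR K (fun k => b k * lam k)) in *.
      replace (quad K B lam - be ^ 2 / a) with
        (quad K B lam + 2 * (- be / a) * be + a * (- be / a) ^ 2) by (field; lra).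
      lra. }
    destruct (IHK B' v' HB') as [M' [HM' HM]].
    assert (hc0 : 0 <= v K ^ 2 / a).
    { unfold Rdiv; apply Rle_mult_inv_pos; [nra|auto]. }
    exists (2 * M' + 2 * (v K ^ 2 / a)). split; [lra|].
    intros lam.
    set (be := sumR K (fun k => b k * lam k)).
    assert (hL : sumR (S K) (fun k => lam k * v k)
                 = sumR K (fun k => lam k * v' k) + v K * (lam K + be / a)).
    { simpl.
      rewrite (sumR_ext K (fun k => lam k * v' k)
                (fun k => 1 * (lam k * v k) + (- (v K / a)) * (b k * lam k)))
        by (intros; unfold v'; field; lra).
      rewrite sumR_lin. unfold be. field; lra. }
    assert (hQ : quad (S K) B lam = quad K B' lam + a * (lam K + be / a) ^ 2).
    { rewrite hsplit, hq'. unfold be. field; lra. }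
    rewrite hL, hQ.
    assert (hP := pd_nonneg K B' HB' lam).
    assert (hM := HM lam).
    set (P := quad K B' lam) in *.
    set (L' := sumR K (fun k => lam k * v' k)) in *.
    set (s := lam K + be / a).
    set (c := v K ^ 2 / a) in *.
    assert (hc : v K ^ 2 = c * a) by (unfold c; field; lra).
    assert (h1 : (L' + v K * s) ^ 2 <= 2 * L' ^ 2 + 2 * (v K ^ 2) * s ^ 2).
    { assert (h0 := pow2_ge_0 (L' - v K * s)).
      replace (2 * L' ^ 2 + 2 * (v K ^ 2) * s ^ 2) with ((L' + v K * s) ^ 2 + (L' - v K * s) ^ 2) by ring.
      lra. }
    rewrite hc in h1.
    assert (0 <= M' * (a * s ^ 2)) by (apply Rmult_le_pos; [lra| nra]).
    assert (0 <= c * P) by (apply Rmult_le_pos; lra).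
    replace ((2 * M' + 2 * c) * (P + a * s ^ 2)) with
      (2 * (M' * P) + 2 * (M' * (a * s ^ 2)) + 2 * (c * P) + 2 * (c * a) * s ^ 2) by ring.
    lra.
Qed.

Lemma Rsup_lub E : bound E -> (exists x, E x) -> is_lub E (Rsup E).
Proof. intros hb he. unfold Rsup. destruct (excluded_middle_informative _) as [H|H].
  - destruct (completeness E (proj1 H) (proj2 H)) as [m hm]; simpl; exact hm.
  - exfalso; apply H; auto. Qed.

Lemma f_le I K n q t lam rho M : nonzeroK K lam -> inC I K n q rho ->
  (sumR K (fun k => lam k * (t k - mu I n q rho k)))^2 <= M * quad K (Sigma I n q rho) lam ->
  f_obj I K n q t lam rho <= M.
Proof. intros hnz hC hM. unfold f_obj.
  assert (hQ : 0 < quad K (Sigma I n q rho) lam) by (apply hC; auto).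
  set (L := sumR K (fun k => lam k * (t k - mu I n q rho k))) in *.
  assert (Rmax 0 L ^ 2 <= L ^ 2) by (unfold Rmax; destruct (Rle_dec 0 L); nra).
  apply (Rmult_le_reg_r (quad K (Sigma I n q rho) lam)); auto.
  replace (Rmax 0 L ^ 2 / quad K (Sigma I n q rho) lam * quad K (Sigma I n q rho) lam)
    with (Rmax 0 L ^ 2) by (field; lra). lra. Qed.

Lemma bound_C I K n q t Lam (hLam : forall lam, Lam lam -> nonzeroK K lam) rho :
  inC I K n q rho -> bound (fvals I K n q t Lam rho).
Proof. intros hrho.
  destruct (pd_bound K (Sigma I n q rho) (fun k => t k - mu I n q rho k) hrho) as [M [_ HM]].
  exists M. intros y [lam [hl ->]]. apply f_le; auto. Qed.

Lemma mu_cvx I n q th x y k :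
  mu I n q (cvx_comb th x y) k = th * mu I n q x k + (1 - th) * mu I n q y k.
Proof. unfold mu. rewrite <- sumR_lin. apply sumR_ext; intros.
  rewrite <- sumR_lin. apply sumR_ext; intros. unfold cvx_comb; ring. Qed.

Lemma Sigma_cvx I n q th x y k l :
  Sigma I n q (cvx_comb th x y) k l = th * Sigma I n q x k l + (1 - th) * Sigma I n q y k l
   + th * (1 - th) * sumR I (fun i =>
       (sumR (n i) (fun j => q i j k * x i j) - sumR (n i) (fun j => q i j k * y i j)) *
       (sumR (n i) (fun j => q i j l * x i j) - sumR (n i) (fun j => q i j l * y i j))).
Proof. unfold Sigma. rewrite <- sumR_lin3. apply sumR_ext; intros i _.
  assert (e1 : sumR (n i) (fun j => q i j k * q i j l * cvx_comb th x y i j)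
    = th * sumR (n i) (fun j => q i j k * q i j l * x i j)
      + (1 - th) * sumR (n i) (fun j => q i j k * q i j l * y i j)).
  { rewrite <- sumR_lin; apply sumR_ext; intros; unfold cvx_comb; ring. }
  assert (e2 : forall k, sumR (n i) (fun j => q i j k * cvx_comb th x y i j)
    = th * sumR (n i) (fun j => q i j k * x i j)
      + (1 - th) * sumR (n i) (fun j => q i j k * y i j)).
  { intros; rewrite <- sumR_lin; apply sumR_ext; intros; unfold cvx_comb; ring. }
  rewrite e1, !e2. ring. Qed.

Lemma quad_cvx I K n q th x y lam : exists D, 0 <= D /\
  quad K (Sigma I n q (cvx_comb th x y)) lam
  = th * quad K (Sigma I n q x) lam + (1 - th) * quad K (Sigma I n q y) lam + th * (1 - th) * D.
Proof.
  pose (w := fun i k => sumR (n i) (fun j => q i j k * x i j) - sumR (n i) (fun j => q i j k * y i j)).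
  exists (quad K (fun k l => sumR I (fun i => w i k * w i l)) lam). split.
  - apply quad_gram_nonneg.
  - rewrite <- quad_lin3. apply quad_extS; intros. rewrite Sigma_cvx. reflexivity. Qed.

Lemma qol th a b p r : 0 < p -> 0 < r -> 0 <= th <= 1 -> 0 < th * p + (1 - th) * r ->
  (th * a + (1 - th) * b) ^ 2 / (th * p + (1 - th) * r) <= th * (a ^ 2 / p) + (1 - th) * (b ^ 2 / r).
Proof. intros hp hr hth hV.
  assert (E : th * (a ^ 2 / p) + (1 - th) * (b ^ 2 / r)
     - (th * a + (1 - th) * b) ^ 2 / (th * p + (1 - th) * r)
     = th * (1 - th) * (a * r - b * p) ^ 2 / (p * r * (th * p + (1 - th) * r))) by (field; lra).
  assert (0 <= th * (1 - th) * (a * r - b * p) ^ 2 / (p * r * (th * p + (1 - th) * r))).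
  { unfold Rdiv. apply Rle_mult_inv_pos.
    - apply Rmult_le_pos; [apply Rmult_le_pos; lra| apply pow2_ge_0].
    - apply Rmult_lt_0_compat; [apply Rmult_lt_0_compat|]; lra. }
  lra. Qed.

Lemma f_convex I K n q t lam x y th : nonzeroK K lam -> inC I K n q x -> inC I K n q y ->
  0 <= th <= 1 ->
  f_obj I K n q t lam (cvx_comb th x y)
  <= th * f_obj I K n q t lam x + (1 - th) * f_obj I K n q t lam y.
Proof. intros hnz hx hy hth. unfold f_obj.
  assert (hLz : sumR K (fun k => lam k * (t k - mu I n q (cvx_comb th x y) k))
     = th * sumR K (fun k => lam k * (t k - mu I n q x k))
       + (1 - th) * sumR K (fun k => lam k * (t k - mu I n q y k))).
  { rewrite <- sumR_lin; apply sumR_ext; intros; rewrite mu_cvx; ring. }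
  rewrite hLz.
  destruct (quad_cvx I K n q th x y lam) as [D [hD hQ]]. rewrite hQ.
  assert (hQx : 0 < quad K (Sigma I n q x) lam) by (apply hx; auto).
  assert (hQy : 0 < quad K (Sigma I n q y) lam) by (apply hy; auto).
  set (Qx := quad K (Sigma I n q x) lam) in *.
  set (Qy := quad K (Sigma I n q y) lam) in *.
  set (Lx := sumR K (fun k => lam k * (t k - mu I n q x k))).
  set (Ly := sumR K (fun k => lam k * (t k - mu I n q y k))).
  assert (hV : 0 < th * Qx + (1 - th) * Qy) by nra.
  assert (hux : 0 <= Rmax 0 Lx /\ Lx <= Rmax 0 Lx) by (split; [apply Rmax_l|apply Rmax_r]).
  assert (huy : 0 <= Rmax 0 Ly /\ Ly <= Rmax 0 Ly) by (split; [apply Rmax_l|apply Rmax_r]).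
  set (ux := Rmax 0 Lx) in *. set (uy := Rmax 0 Ly) in *.
  set (uz := Rmax 0 (th * Lx + (1 - th) * Ly)).
  assert (huz0 : 0 <= uz) by apply Rmax_l.
  assert (huz : uz <= th * ux + (1 - th) * uy).
  { unfold uz, Rmax; destruct (Rle_dec 0 _); nra. }
  assert (hD' : 0 <= th * (1 - th) * D) by (apply Rmult_le_pos; [apply Rmult_le_pos|]; lra).
  eapply Rle_trans; [|apply (qol th ux uy Qx Qy); auto].
  unfold Rdiv. apply Rmult_le_compat.
  - apply pow2_ge_0.
  - left; apply Rinv_0_lt_compat; lra.
  - apply pow_incr; lra.
  - apply Rinv_le_contravar; lra.
Qed.

Theorem proposition1 (I K : nat) (n : nat -> nat) (q : nat -> nat -> nat -> R)
  (t : nat -> R) (Lam : (nat -> R) -> Prop)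
  (hn : forall i, (i < I)%nat -> (2 <= n i)%nat)
  (hLam : forall lam, Lam lam -> nonzeroK K lam) :
  (* g is finite on C: the set of values f(lam, rho), lam in Lam, is bounded above *)
  (forall rho, inC I K n q rho -> bound (fvals I K n q t Lam rho)) /\
  (* C is convex and g is convex on C *)
  (forall (x y : nat -> nat -> R) (th : R),
     inC I K n q x -> inC I K n q y -> 0 <= th <= 1 ->
     inC I K n q (cvx_comb th x y) /\
     g_obj I K n q t Lam (cvx_comb th x y)
       <= th * g_obj I K n q t Lam x + (1 - th) * g_obj I K n q t Lam y).
Proof.
  split; [intros; apply bound_C; auto|].
  intros x y th hx hy hth.
  assert (hz : inC I K n q (cvx_comb th x y)).
  { intros lam hnz. destruct (quad_cvx I K n q th x y lam) as [D [hD hQ]]. rewrite hQ.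
    assert (0 < quad K (Sigma I n q x) lam) by (apply hx; auto).
    assert (0 < quad K (Sigma I n q y) lam) by (apply hy; auto).
    assert (0 <= th * (1 - th) * D) by (apply Rmult_le_pos; [apply Rmult_le_pos|]; lra).
    nra. }
  split; auto.
  destruct (classic (exists lam, Lam lam)) as [[l0 hl0]|hne].
  - assert (lub : forall rho, inC I K n q rho -> is_lub (fvals I K n q t Lam rho) (g_obj I K n q t Lam rho)).
    { intros rho hr. apply Rsup_lub; [apply bound_C; auto|].
      exists (f_obj I K n q t l0 rho), l0; auto. }
    destruct (lub _ hz) as [_ hleast]. apply hleast.
    intros w [lam [hl ->]].
    eapply Rle_trans; [apply f_convex; auto|].
    destruct (lub _ hx) as [ubx _]. destruct (lub _ hy) as [uby _].
    assert (f_obj I K n q t lam x <= g_obj I K n q t Lam x) by (apply ubx; exists lam; auto).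
    assert (f_obj I K n q t lam y <= g_obj I K n q t Lam y) by (apply uby; exists lam; auto).
    nra.
  - assert (h0 : forall rho, g_obj I K n q t Lam rho = 0).
    { intros rho. unfold g_obj, Rsup. destruct (excluded_middle_informative _) as [H|H]; auto.
      exfalso. destruct (proj2 H) as [w [lam [hl _]]]. apply hne; eauto. }
    rewrite !h0. lra.
Qed.
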